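(* For each $i\in\{1,2,3,4\}$, the minimal polynomial of $\mathcal{M}_i^{-1}\mathcal{A}$ has degree at most $n+q+1$.
   Context: Let $A_1\in\mathbb{R}^{p\times n}$ have full column rank and $A_2\in\mathbb{R}^{q\times n}$. Set $P=A_1^TA_1$, and let $\hat P\in\mathbb{R}^{n\times n}$ be symmetric positive definite. Define $\mathcal{A}=\begin{pmatrix}I_p&A_1&0\\0&P&A_2^T\\0&A_2&I_q\end{pmatrix}$, $\mathcal{M}_1=\begin{pmatrix}I_p&0&0\\0&\hat P&0\\0&0&I_q\end{pmatrix}$, $\mathcal{M}_2=\begin{pmatrix}I_p&0&0\\0&\hat P&A_2^T\\0&0&I_q\end{pmatrix}$, $\mathcal{M}_3=\begin{pmatrix}I_p&A_1&0\\0&\hat P&0\\0&0&I_q\end{pmatrix}$, $\mathcal{M}_4=\begin{pmatrix}I_p&A_1&0\\0&\hat P&A_2^T\\0&0&I_q\end{pmatrix}$. *)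

(* Defs.v *)
From HB Require Import structures.
From mathcomp Require Import all_boot all_order all_algebra.
Set Implicit Arguments. Unset Strict Implicit. Unset Printing Implicit Defensive.
Import Order.TTheory GRing.Theory Num.Theory.
Local Open Scope ring_scope.

(* Minimal polynomial of a square matrix of arbitrary size N.  MathComp's
   [mxminpoly] needs a size of the form N'.+1; the (empty) 0x0 matrix has
   minimal polynomial 1. *)
Definition mxminpolyN (F : fieldType) (N : nat) : 'M[F]_N -> {poly F} :=
  match N return 'M[F]_N -> {poly F} with
  | 0 => fun _ => 1
  | N'.+1 => fun A => mxminpoly A
  end.

Definition block3 (R : Type) (p n q : nat)
  (B11 : 'M[R]_(p, p)) (B12 : 'M[R]_(p, n)) (B13 : 'M[R]_(p, q))
  (B21 : 'M[R]_(n, p)) (B22 : 'M[R]_(n, n)) (B23 : 'M[R]_(n, q))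
  (B31 : 'M[R]_(q, p)) (B32 : 'M[R]_(q, n)) (B33 : 'M[R]_(q, q))
  : 'M[R]_(p + (n + q)) :=
  block_mx B11 (row_mx B12 B13) (col_mx B21 B31) (block_mx B22 B23 B32 B33).

Section Mats.
Variables (R : realFieldType) (p n q : nat).
Variables (A1 : 'M[R]_(p, n)) (A2 : 'M[R]_(q, n)) (Ph : 'M[R]_n).

Definition PP : 'M[R]_n := A1^T *m A1.

Definition calA : 'M[R]_(p + (n + q)) := @block3 R p n q 1%:M A1 0 0 PP A2^T 0 A2 1%:M.
Definition calM1 : 'M[R]_(p + (n + q)) := @block3 R p n q 1%:M 0 0 0 Ph 0 0 0 (1%:M : 'M[R]_q).
Definition calM2 : 'M[R]_(p + (n + q)) := @block3 R p n q 1%:M 0 0 0 Ph A2^T 0 0 (1%:M : 'M[R]_q).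
Definition calM3 : 'M[R]_(p + (n + q)) := @block3 R p n q 1%:M A1 0 0 Ph 0 0 0 (1%:M : 'M[R]_q).
Definition calM4 : 'M[R]_(p + (n + q)) := @block3 R p n q 1%:M A1 0 0 Ph A2^T 0 0 (1%:M : 'M[R]_q).
End Mats.

Definition spd (R : realFieldType) (n : nat) (M : 'M[R]_n) : Prop :=
  M^T = M /\ forall x : 'cV[R]_n, x != 0 -> 0 < (x^T *m M *m x) 0 0.

(* Main.v *)
Require Import Defs.
From HB Require Import structures.
From mathcomp Require Import all_boot all_order all_algebra.
Import Order.TTheory GRing.Theory Num.Theory.
Local Open Scope ring_scope.

Section Aux.
Variable F : fieldType.

Definition pw {N} (A : 'M[F]_N) i : 'M[F]_N := iter i (mulmx A) 1%:M.
Definition peval {N} (A : 'M[F]_N) (r : {poly F}) : 'M[F]_N :=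
  \sum_(i < size r) r`_i *: pw A i.

Lemma horner_peval N (A : 'M[F]_N.+1) r : horner_mx A r = peval A r.
Proof.
rewrite -{1}[r]coefK poly_def linear_sum; apply: eq_bigr => i _.
rewrite linearZ /= rmorphXn /= horner_mx_X; congr (_ *: _).
rewrite /pw; elim: (nat_of_ord i) => [|k IH] /=; first by rewrite expr0.
by rewrite exprS IH mulmxE.
Qed.

Lemma peval_cast N N' (E : N = N') (A : 'M[F]_N) r :
  peval (castmx (E, E) A) r = castmx (E, E) (peval A r).
Proof. by case: N' / E; rewrite !castmx_id. Qed.

Lemma horner_cast N N' (E : N = N'.+1) (A : 'M[F]_N) c :
  horner_mx (castmx (E, E) A) (('X - 1%:P) * c) =
  castmx (E, E) ((A - 1%:M) *m peval A c).
Proof.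
subst N; rewrite !castmx_id rmorphM rmorphB /= horner_mx_X horner_mx_C horner_peval.
by rewrite mulmxE.
Qed.

Definition ublk {p k} (X : 'M[F]_(p, k)) (B : 'M[F]_k) : 'M[F]_(p + k) :=
  block_mx 1%:M X 0 B.

Lemma ublk_mul p k (X X' : 'M[F]_(p, k)) B B' :
  ublk X B *m ublk X' B' = ublk (X' + X *m B') (B *m B').
Proof.
rewrite /ublk mulmx_block !mul1mx !mul0mx !mulmx0 !addr0 !add0r.
by [].
Qed.

Lemma pw_ublk p k (X : 'M[F]_(p, k)) B i :
  pw (ublk X B) i = ublk (\sum_(j < i) X *m pw B j) (pw B i).
Proof.
elim: i => [|i IH]; first by rewrite /pw /= big_ord0 /ublk scalar_mx_block.
rewrite /pw /= -/(pw _ i) IH ublk_mul big_ord_recr /=.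
by [].
Qed.


Lemma sum_block m p1 p2 k1 k2 (f1 : 'I_m -> 'M[F]_(p1, k1)) (f2 : 'I_m -> 'M[F]_(p1, k2))
  (f3 : 'I_m -> 'M[F]_(p2, k1)) (f4 : 'I_m -> 'M[F]_(p2, k2)) :
  \sum_(i < m) block_mx (f1 i) (f2 i) (f3 i) (f4 i) =
  block_mx (\sum_i f1 i) (\sum_i f2 i) (\sum_i f3 i) (\sum_i f4 i).
Proof.
elim: m f1 f2 f3 f4 => [|m IH] f1 f2 f3 f4; first by rewrite !big_ord0 block_mx0.
rewrite !big_ord_recr /= IH add_block_mx //.
Qed.

Lemma peval_ublk p k (X : 'M[F]_(p, k)) B r :
  exists TL Y, peval (ublk X B) r = block_mx TL Y 0 (peval B r).
Proof.
rewrite /peval.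
under eq_bigr => i _ do rewrite pw_ublk /ublk scale_block_mx scaler0.
rewrite sum_block; do 2 eexists; congr block_mx; exact: big1.
Qed.

Lemma size_minN N (T : 'M[F]_N) P : P != 0 ->
  (forall N' (E : N = N'.+1), horner_mx (castmx (E, E) T) P = 0) ->
  (size (mxminpolyN T) <= size P)%N.
Proof.
case: N T => [|N'] T nzP H /=; first by rewrite size_poly1 size_poly_gt0.
have := H N' erefl; rewrite castmx_id => /mxminpoly_min/dvdp_leq; apply; exact nzP.
Qed.

Lemma main_gen p k (X : 'M[F]_(p, k)) B :
  ((size (mxminpolyN (ublk X B))).-1 <= k.+1)%N.
Proof.
set P := ('X - 1%:P) * char_poly B.
have sP : size P = k.+2.
  by rewrite /P size_monicM ?monicXsubC ?size_XsubC ?size_char_poly // -size_poly_eq0 size_char_poly.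
have nzP : P != 0 by rewrite -size_poly_eq0 sP.
suff : (size (mxminpolyN (ublk X B)) <= size P)%N by rewrite sP; case: size.
apply: size_minN => // N' E.
rewrite horner_cast.
have [TL [Y ->]] := @peval_ublk p k X B (char_poly B).
have -> : peval B (char_poly B) = 0.
  case: k X B {P sP nzP E Y} => [|k] X B; first by rewrite flatmx0.
  by rewrite -horner_peval Cayley_Hamilton.
rewrite /ublk (scalar_mx_block p k) opp_block_mx add_block_mx subrr !oppr0 !addr0.
rewrite mulmx_block !mul0mx !mulmx0 !addr0 block_mx0.
by apply/matrixP => i j; rewrite castmxE !mxE.
Qed.

Lemma ublk_inv p k (X : 'M[F]_(p, k)) B :
  exists X' B', invmx (ublk X B) = ublk X' B'.
Proof.
have [uB|nuB] := boolP (B \in unitmx); last first.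
  exists X, B; apply: invmx_out; rewrite inE unitmxE /ublk det_ublock det1 mul1r.
  by rewrite -unitmxE.
exists (- (X *m invmx B)), (invmx B).
have uM : ublk X B \in unitmx by rewrite unitmxE /ublk det_ublock det1 mul1r -unitmxE.
have H : ublk X B *m ublk (- (X *m invmx B)) (invmx B) = 1%:M.
  by rewrite ublk_mul mulmxV // addrC subrr /ublk -scalar_mx_block.
by rewrite -[LHS]mulmx1 -H mulKmx.
Qed.

End Aux.
Arguments ublk {F p k}.
Arguments ublk_inv {F p k}.
Arguments main_gen {F p k}.
Arguments ublk_mul {F p k}.

Theorem theorem6 (R : realFieldType) (p n q : nat)
  (A1 : 'M[R]_(p, n)) (A2 : 'M[R]_(q, n)) (Ph : 'M[R]_n) :
  \rank A1 = n -> spd Ph ->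
  forall M, M \in [:: @calM1 R p n q Ph; @calM2 R p n q A2 Ph; @calM3 R p n q A1 Ph; @calM4 R p n q A1 A2 Ph] ->
    ((size (mxminpolyN (invmx M *m @calA R p n q A1 A2))).-1 <= n + q + 1)%N.
Proof.
move=> _ _ M HM.
have eA : @calA R p n q A1 A2 = ublk (row_mx A1 0) (block_mx (PP A1) A2^T A2 1%:M).
  by rewrite /calA /block3 col_mx0.
have gen : forall X B, ((size (mxminpolyN (invmx (@ublk R p (n + q) X B) *m
    @calA R p n q A1 A2))).-1 <= n + q + 1)%N.
  move=> X B; have [X' [B' ->]] := ublk_inv X B.
  by rewrite eA ublk_mul addn1 main_gen.
move: HM; rewrite !inE => /or4P [] /eqP ->.
- by rewrite /calM1 /block3 col_mx0 -/(ublk _ _) gen.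
- by rewrite /calM2 /block3 col_mx0 -/(ublk _ _) gen.
- by rewrite /calM3 /block3 col_mx0 -/(ublk _ _) gen.
- by rewrite /calM4 /block3 col_mx0 -/(ublk _ _) gen.
Qed.
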